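(* Let $f:\mathbb{R}/\mathbb{Z}\to\mathbb{Z}/2\mathbb{Z}$ be defined by $f(t)=1$ if $t\in[\tfrac18,\tfrac12)\cup[\tfrac58,\tfrac34)$ and $f(t)=0$ if $t\in[0,\tfrac18)\cup[\tfrac12,\tfrac58)\cup[\tfrac34,1)$. Let $t$ be uniformly distributed on $\mathbb{R}/\mathbb{Z}$. Then for every $k\ge1$, $$\mathbb{P}\big(f(2^kt)+f(2^{k-1}t)+\cdots+f(t)=0 \text{ in } \mathbb{Z}/2\mathbb{Z}\big)=\tfrac58.$$ In particular the sum does not become equidistributed on $\mathbb{Z}/2\mathbb{Z}$ as $k\to\infty$, even though $f$ is supported neither on a proper subgroup nor on a coset of a proper subgroup. *)

(* Defs.v *)
(* classical reals, Riemann integral as the uniform measure on R/Z. *)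
From Stdlib Require Import Reals.
Open Scope R_scope.

Definition in_Ico (a b x : R) : bool :=
  if Rle_dec a x then (if Rlt_dec x b then true else false) else false.

(* f : R/Z -> Z/2Z, with Z/2Z encoded as bool (true = 1, false = 0);
   a real t represents its class in R/Z via its fractional part. *)
Definition f (t : R) : bool :=
  let s := frac_part t in
  in_Ico (1/8) (1/2) s || in_Ico (5/8) (3/4) s.

Fixpoint fsum (k : nat) (t : R) : bool :=
  match k with
  | O => f t
  | S k' => xorb (f (2 ^ k * t)) (fsum k' t)
  end.

Definition event_ind (k : nat) (t : R) : R :=
  if fsum k t then 0 else 1.

(* Main.v *)
Require Import Defs.
From Stdlib Require Import Reals Lra Lia.
From Coquelicot Require Import Coquelicot.
Open Scope R_scope.

Lemma frac_char (x : R) (z : Z) : IZR z <= x < IZR z + 1 -> frac_part x = x - IZR z.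
Proof.
  intros H. unfold frac_part, Int_part.
  assert (E : (z + 1)%Z = up x).
  { apply tech_up; rewrite plus_IZR; lra. }
  rewrite <- E. replace (z + 1 - 1)%Z with z by lia. reflexivity.
Qed.

Lemma frac_decomp (x : R) : x = IZR (Int_part x) + frac_part x.
Proof. unfold frac_part; ring. Qed.

Lemma frac_double (x : R) :
  frac_part (2 * x) = if Rlt_dec (frac_part x) (1/2) then 2 * frac_part x
                      else 2 * frac_part x - 1.
Proof.
  destruct (base_fp x) as [H1 H2].
  pose proof (frac_decomp x) as D.
  destruct (Rlt_dec (frac_part x) (1/2)) as [h|h].
  - rewrite (frac_char (2 * x) (2 * Int_part x)); rewrite mult_IZR; lra.
  - rewrite (frac_char (2 * x) (2 * Int_part x + 1)); rewrite plus_IZR, mult_IZR; lra.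
Qed.

Definition P (t : R) : bool := in_Ico (1/4) (1/2) (frac_part t).

Lemma f_P (s : R) : Defs.f s = xorb (P s) (P (2 * s)).
Proof.
  unfold Defs.f, P. rewrite frac_double.
  destruct (base_fp s) as [H1 H2].
  set (u := frac_part s) in *. destruct (Rlt_dec u (1/2));
  unfold in_Ico;
  repeat match goal with
  | |- context [Rle_dec ?a ?b] => destruct (Rle_dec a b)
  | |- context [Rlt_dec ?a ?b] => destruct (Rlt_dec a b)
  end; simpl; try reflexivity; exfalso; repeat match goal with H : ~ _ |- _ => apply Rnot_lt_le in H || apply Rnot_le_lt in H end; lra.
Qed.

Lemma fsum_P (k : nat) (t : R) : fsum k t = xorb (P t) (P (2 ^ (S k) * t)).
Proof.
  induction k as [|k IH].
  - simpl. rewrite f_P. replace (2 * 1 * t) with (2 * t) by ring. reflexivity.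
  - change (fsum (S k) t) with (xorb (Defs.f (2 ^ S k * t)) (fsum k t)). rewrite IH, f_P.
    replace (2 * (2 ^ S k * t)) with (2 ^ S (S k) * t) by (simpl; ring).
    destruct (P t), (P (2 ^ S k * t)), (P (2 ^ S (S k) * t)); reflexivity.
Qed.

Definition Yb (u : R) : R := if P u then 1 else 0.

Lemma const_R a b c : is_RInt (fun _ => c) a b ((b - a) * c).
Proof. exact (is_RInt_const a b c). Qed.

Lemma chasles_R (g : R -> R) a b c l1 l2 :
  is_RInt g a b l1 -> is_RInt g b c l2 -> is_RInt g a c (l1 + l2).
Proof. intros. exact (is_RInt_Chasles g a b c l1 l2 H H0). Qed.

Lemma val_R (g : R -> R) (a b l l' : R) : is_RInt g a b l -> l = l' -> is_RInt g a b l'.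
Proof. intros; subst; auto. Qed.

Lemma piece_R (g : R -> R) a b c : a <= b -> (forall x, a < x < b -> g x = c) ->
  is_RInt g a b ((b - a) * c).
Proof.
  intros Hab H. apply is_RInt_ext with (fun _ => c).
  - intros x. rewrite Rmin_left, Rmax_right by lra. intros Hx; symmetry; auto.
  - apply const_R.
Qed.

Lemma unit_int (j : nat) : is_RInt Yb (INR j) (INR j + 1) (1/4).
Proof.
  assert (Hf : forall x, INR j < x < INR j + 1 -> frac_part x = x - INR j).
  { intros x Hx. rewrite INR_IZR_INZ in *. apply frac_char; lra. }
  apply val_R with (l := (INR j + 1/4 - INR j) * 0 + (INR j + 1/2 - (INR j + 1/4)) * 1
                     + (INR j + 1 - (INR j + 1/2)) * 0); [|field].
  apply chasles_R with (INR j + 1/2); [apply chasles_R with (INR j + 1/4)|].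
  - apply piece_R; [lra|]. intros x Hx. unfold Yb, P, in_Ico. rewrite Hf by lra.
    destruct (Rle_dec _ _); [lra|reflexivity].
  - apply piece_R; [lra|]. intros x Hx. unfold Yb, P, in_Ico. rewrite Hf by lra.
    destruct (Rle_dec _ _); [|lra]. destruct (Rlt_dec _ _); [reflexivity|lra].
  - apply piece_R; [lra|]. intros x Hx. unfold Yb, P, in_Ico. rewrite Hf by lra.
    destruct (Rle_dec _ _); [|reflexivity]. destruct (Rlt_dec _ _); [lra|reflexivity].
Qed.

Lemma multi_int (p n : nat) : is_RInt Yb (INR p) (INR p + INR n) (INR n / 4).
Proof.
  induction n as [|n IH].
  - simpl. replace (INR p + 0) with (INR p) by ring. replace (0/4) with 0 by field.
    apply (is_RInt_point Yb (INR p)).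
  - apply val_R with (l := INR n / 4 + 1/4); [|rewrite S_INR; field].
    apply chasles_R with (INR p + INR n); auto.
    replace (INR p + INR (S n)) with (INR (p + n) + 1) by (rewrite S_INR, plus_INR; ring).
    rewrite <- plus_INR. apply unit_int.
Qed.

Lemma Y_int (m : R) (p n : nat) a b : 0 < m -> a = INR p / m -> b = (INR p + INR n) / m ->
  is_RInt (fun t => Yb (m * t)) a b (INR n / 4 / m).
Proof.
  intros Hm Ha Hb.
  assert (H := multi_int p n).
  assert (H1 : is_RInt Yb (m * a + 0) (m * b + 0) (INR n / 4)).
  { replace (m * a + 0) with (INR p) by (subst; field; lra).
    replace (m * b + 0) with (INR p + INR n) by (subst; field; lra). exact H. }
  apply is_RInt_comp_lin in H1.
  apply (is_RInt_scal _ _ _ (/ m)) in H1.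
  apply val_R with (l := / m * (INR n / 4)); [|field; lra].
  apply is_RInt_ext with (2 := H1).
  intros x _. change (/ m * (m * Yb (m * x + 0)) = Yb (m * x)).
  replace (m * x + 0) with (m * x) by ring. field. lra.
Qed.

Lemma oneminus_int (m : R) (p n : nat) a b : 0 < m -> a = INR p / m -> b = (INR p + INR n) / m ->
  is_RInt (fun t => 1 - Yb (m * t)) a b ((b - a) * 1 - INR n / 4 / m).
Proof.
  intros Hm Ha Hb.
  exact (is_RInt_minus (fun _ => 1) (fun t => Yb (m * t)) a b _ _ (const_R a b 1)
          (Y_int m p n a b Hm Ha Hb)).
Qed.

Theorem mainTheorem14 :
  forall k : nat, (1 <= k)%nat ->
    exists pr : Riemann_integrable (event_ind k) 0 1,
      RiemannInt pr = 5 / 8.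
Proof.
  intros k Hk. destruct k as [|k']; [lia|].
  set (m := 2 ^ S (S k')).
  set (M := (2 ^ k')%nat).
  assert (HM : INR M = 2 ^ k') by (unfold M; rewrite pow_INR; reflexivity).
  assert (HMpos : 0 < INR M) by (rewrite HM; apply pow_lt; lra).
  assert (Hm : m = 4 * INR M) by (unfold m; rewrite HM; simpl; ring).
  assert (Hmpos : 0 < m) by lra.
  assert (Hev : forall t, event_ind (S k') t = if xorb (P t) (P (m * t)) then 0 else 1).
  { intros t. unfold event_ind. rewrite fsum_P. reflexivity. }
  assert (Hf : forall x, 0 < x < 1 -> frac_part x = x).
  { intros x Hx. rewrite (frac_char x 0); lra. }
  assert (HI : is_RInt (event_ind (S k')) 0 1 (5/8)).
  { apply val_R with (l := ((1/4 - 0) * 1 - INR M / 4 / m) + INR M / 4 / m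
                      + ((1 - 1/2) * 1 - INR (2 * M) / 4 / m));
      [| rewrite mult_INR, Hm; replace (INR 2) with 2 by (simpl; ring); field; lra].
    apply chasles_R with (1/2); [apply chasles_R with (1/4)|].
    - apply is_RInt_ext with (fun t => 1 - Yb (m * t)).
      + rewrite Rmin_left, Rmax_right by lra. intros x Hx. rewrite Hev.
        unfold P at 1, in_Ico. rewrite Hf by lra.
        destruct (Rle_dec _ _); [lra|]. unfold Yb. simpl. destruct (P (m * x)); simpl; ring.
      + apply (oneminus_int m 0 M); auto; simpl; rewrite Hm; field; lra.
    - apply is_RInt_ext with (fun t => Yb (m * t)).
      + rewrite Rmin_left, Rmax_right by lra. intros x Hx. rewrite Hev.
        unfold P at 1, in_Ico. rewrite Hf by lra.
        destruct (Rle_dec _ _); [|lra]. destruct (Rlt_dec _ _); [|lra].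
        unfold Yb. simpl. destruct (P (m * x)); simpl; ring.
      + apply (Y_int m M M); auto; [rewrite Hm; field; lra|].
        rewrite Hm; field; lra.
    - apply is_RInt_ext with (fun t => 1 - Yb (m * t)).
      + rewrite Rmin_left, Rmax_right by lra. intros x Hx. rewrite Hev.
        unfold P at 1, in_Ico. rewrite Hf by lra.
        destruct (Rle_dec _ _); [|lra]. destruct (Rlt_dec _ _); [lra|].
        unfold Yb. simpl. destruct (P (m * x)); simpl; ring.
      + apply (oneminus_int m (2 * M) (2 * M)); auto;
          rewrite ?mult_INR, Hm; replace (INR 2) with 2 by (simpl; ring); field; lra. }
  exists (ex_RInt_Reals_0 _ _ _ (ex_intro _ _ HI)).
  rewrite <- RInt_Reals. apply is_RInt_unique. exact HI.
Qed.
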